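(* Let $U$ be a Hilbert space, $T: U\rightrightarrows U$, $(\hat u,\hat w)\in\operatorname{graph}T$, $N,M\in\mathcal{L}(U;U)$ with $M\ge0$, and $\gamma\in[0,1]$. Then $(N,\gamma M)$-strong submonotonicity of $T$ at $(\hat u,\hat w)$ implies $(\gamma M, N, M)$-partial strong submonotonicity at the same point. If $T^{-1}(\hat w)=\{\hat u\}$ is a singleton, these two properties are equivalent.
   Context: For $T\in\mathcal{L}(U;U)$: $\langle x,z\rangle_T:=\langle Tx,z\rangle$, $\|x\|^2_T:=\langle Tx,x\rangle$, $\operatorname{dist}^2_T(z,A):=\inf_{u\in A}\|z-u\|^2_T$. For $\Xi,N,M\in\mathcal{L}(U;U)$ with $M\ge0$, $T$ is $(\Xi,N,M)$-partially strongly submonotone at $(\hat u,\hat w)$ if there is a neighbourhood $\mathcal{U}\ni\hat u$ with $\inf_{u^*\in T^{-1}(\hat w)}(\langle w-\hat w,u-u^*\rangle_N + \|u-u^*\|^2_{M-\Xi}) \ge \operatorname{dist}^2_M(u,T^{-1}(\hat w))$ for all $u\in\mathcal{U}$, $w\in T(u)$. $T$ is $(N,M)$-strongly submonotone if it is $(M,N,M)$-partially strongly submonotone. *)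

(* Defs.v *)
From HB Require Import structures.
From mathcomp Require Import all_boot all_order all_algebra.
From mathcomp Require Import all_classical all_reals all_analysis.
Set Implicit Arguments. Unset Strict Implicit. Unset Printing Implicit Defensive.
Import Order.TTheory GRing.Theory Num.Theory.
Import numFieldNormedType.Exports.
Local Open Scope classical_set_scope.
Local Open Scope ring_scope.

(* A real Hilbert space: a complete normed space U whose norm is induced by
   the inner product ip (symmetric, linear in the first argument). *)
Definition is_inner_product (R : realType) (U : completeNormedModType R)
  (ip : U -> U -> R) : Prop :=
  [/\ forall x y, ip x y = ip y x,
      forall (a : R) x y z, ip (a *: x + y) z = a * ip x z + ip y z &
      forall x, ip x x = `|x| ^+ 2].

Definition bounded_linear (R : realType) (U : completeNormedModType R)
  (A : U -> U) : Prop := linear A /\ continuous A.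

Section Defs.
Context (R : realType) (U : completeNormedModType R) (ip : U -> U -> R).

Definition ipT (T : U -> U) (x z : U) : R := ip (T x) z.
Definition sqnormT (T : U -> U) (x : U) : R := ip (T x) x.
Definition sqdistT (T : U -> U) (z : U) (A : set U) : \bar R :=
  ereal_inf [set (sqnormT T (z - u))%:E | u in A].
Definition psd_op (M : U -> U) : Prop := forall x, 0 <= sqnormT M x.
Definition inv_img (T : U -> set U) (w : U) : set U := [set u | T u w].

Definition partially_strongly_submonotone (T : U -> set U)
  (Xi N M : U -> U) (uh wh : U) : Prop :=
  \forall u \near uh, forall w, T u w ->
    (ereal_inf [set (ipT N (w - wh) (u - us)
                     + sqnormT (fun x => M x - Xi x) (u - us))%:E
               | us in inv_img T wh]
     >= sqdistT M u (inv_img T wh))%E.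

Definition strongly_submonotone (T : U -> set U) (N M : U -> U) (uh wh : U)
  : Prop := partially_strongly_submonotone T M N M uh wh.
End Defs.

(* Main.v *)
Require Import Defs.
From HB Require Import structures.
From mathcomp Require Import all_boot all_order all_algebra.
From mathcomp Require Import all_classical all_reals all_analysis.
From mathcomp Require Import lra.
Import Order.TTheory GRing.Theory Num.Theory.
Import numFieldNormedType.Exports.
Local Open Scope classical_set_scope.
Local Open Scope ring_scope.

Lemma abstr1 (R : realType) (U : Type) (S : set U) (s0 : U) (Hs0 : S s0)
  (A C : U -> R) (hC : forall s, 0 <= C s) (g : R) (g0 : 0 <= g) (g1 : g <= 1) :
  (ereal_inf [set (g * C s)%:E | s in S] <= ereal_inf [set (A s)%:E | s in S])%E ->
  (ereal_inf [set (C s)%:E | s in S] <= ereal_inf [set (A s + (1-g) * C s)%:E | s in S])%E.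
Proof.
move=> H.
set b := ereal_inf [set (C s)%:E | s in S].
have b0 : (0 <= b)%E by apply: le_ereal_inf_tmp => _ [s _ <-]; rewrite lee_fin.
have bC : forall s, S s -> (b <= (C s)%:E)%E.
  by move=> s Ss; apply: ereal_inf_lbound; exists s.

have := bC s0 Hs0.
case: b b0 bC H => [r| |] //= r0 rC H _.
apply: le_ereal_inf_tmp => _ [s Ss <-].
have h1 : ((g * r)%:E <= (A s)%:E)%E.
  apply: (le_trans _ (le_trans H _)).
    apply: le_ereal_inf_tmp => _ [s' Ss' <-].
    by rewrite lee_fin ler_wpM2l //; have := rC s' Ss'; rewrite lee_fin.
  by apply: ereal_inf_lbound; exists s.
have h2 := rC s Ss.
rewrite lee_fin in h1; rewrite lee_fin in h2; rewrite lee_fin.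
have h3 : 0 <= 1 - g by rewrite subr_ge0.
have := ler_wpM2l h3 h2.
nra.
Qed.

Lemma abstr2 (R : realType) (U : Type) (s0 : U)
  (A C : U -> R) (g : R) :
  (ereal_inf [set (C s)%:E | s in [set s0]] <= ereal_inf [set (A s + (1-g) * C s)%:E | s in [set s0]])%E ->
  (ereal_inf [set (g * C s)%:E | s in [set s0]] <= ereal_inf [set (A s)%:E | s in [set s0]])%E.
Proof.
rewrite !image_set1 !ereal_inf1 !lee_fin => H; lra.
Qed.


Theorem corollary4p4 (R : realType) (U : completeNormedModType R)
  (ip : U -> U -> R) (Hip : is_inner_product ip)
  (T : U -> set U) (uh wh : U) (Hgraph : T uh wh)
  (N M : U -> U) (HN : bounded_linear N) (HM : bounded_linear M)
  (HM0 : psd_op ip M) (gamma : R) (Hg0 : 0 <= gamma) (Hg1 : gamma <= 1) :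
  (strongly_submonotone ip T N (fun x => gamma *: M x) uh wh ->
   partially_strongly_submonotone ip T (fun x => gamma *: M x) N M uh wh)
  /\
  (inv_img T wh = [set uh] ->
   (strongly_submonotone ip T N (fun x => gamma *: M x) uh wh <->
    partially_strongly_submonotone ip T (fun x => gamma *: M x) N M uh wh)).
Proof.
case: Hip => _ Hlin _.
have ip0 : forall z, ip 0 z = 0.
  move=> z; have := Hlin 1 0 0 z; rewrite scale1r addr0 mul1r => h; lra.
have ipZ : forall a x z, ip (a *: x) z = a * ip x z.
  by move=> a x z; have := Hlin a x 0 z; rewrite addr0 ip0 addr0.
have E1 : forall v, sqnormT ip (fun x => gamma *: M x - gamma *: M x) v = 0.
  by move=> v; rewrite /sqnormT subrr ip0.
have E2 : forall v, sqnormT ip (fun x => gamma *: M x) v = gamma * sqnormT ip M v.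
  by move=> v; rewrite /sqnormT ipZ.
have E3 : forall v, sqnormT ip (fun x => M x - gamma *: M x) v
                    = (1 - gamma) * sqnormT ip M v.
  by move=> v; rewrite /sqnormT -{1}(scale1r (M v)) -scalerBl ipZ.
have key : forall u w,
  ((ereal_inf [set (ipT ip N (w - wh) (u - us)
                     + sqnormT ip (fun x => gamma *: M x - gamma *: M x) (u - us))%:E
               | us in inv_img T wh]
     >= sqdistT ip (fun x => gamma *: M x) u (inv_img T wh))%E
  <-> (ereal_inf [set (gamma * sqnormT ip M (u - s))%:E | s in inv_img T wh]
       <= ereal_inf [set (ipT ip N (w - wh) (u - s))%:E | s in inv_img T wh])%E) /\
  ((ereal_inf [set (ipT ip N (w - wh) (u - us)
                     + sqnormT ip (fun x => M x - gamma *: M x) (u - us))%:E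
               | us in inv_img T wh]
     >= sqdistT ip M u (inv_img T wh))%E
  <-> (ereal_inf [set (sqnormT ip M (u - s))%:E | s in inv_img T wh]
       <= ereal_inf [set (ipT ip N (w - wh) (u - s) + (1 - gamma) * sqnormT ip M (u - s))%:E
                    | s in inv_img T wh])%E).
  move=> u w; rewrite /sqdistT; split.
    under [X in (_ <= ereal_inf X)%E <-> _]eq_imagel => s _ do rewrite E1 addr0.
    by under [X in (ereal_inf X <= _)%E <-> _]eq_imagel => s _ do rewrite E2.
  by under [X in (_ <= ereal_inf X)%E <-> _]eq_imagel => s _ do rewrite E3.
split.
  move=> H; apply: filterS H => u Hu w Tuw.
  have := Hu w Tuw; rewrite (proj1 (key u w)) (proj2 (key u w)).
  apply: (@abstr1 R U _ uh Hgraph) => // s; exact: HM0.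
move=> Hs; split.
  move=> H; apply: filterS H => u Hu w Tuw.
  have := Hu w Tuw; rewrite (proj1 (key u w)) (proj2 (key u w)).
  apply: (@abstr1 R U _ uh Hgraph) => // s; exact: HM0.
move=> H; apply: filterS H => u Hu w Tuw.
have := Hu w Tuw; rewrite (proj1 (key u w)) (proj2 (key u w)) Hs.
exact: abstr2.
Qed.
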